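(* Let $G=(V,E)$ be a finite directed acyclic graph with $V=\{v_1,\dots,v_n\}$, $G'=(V,E')$ its minimum equivalent graph, and $B$ the associated bipartite graph. For every matching $m$ of $B$, $\mathrm{min}_{sync}(G',\Phi(m))=|E'|-|m|$.
   Context: A path from $u$ to $v$ in a directed graph is a nonempty sequence of edges $(u,w_1),\dots,(w_k,v)$ of that graph. The minimum equivalent graph (MEG) of a finite DAG $G=(V,E)$ is the subgraph $G'=(V,E')$, $E'\subseteq E$, with the same vertex set and the smallest number of edges among subgraphs having the same reachability relation as $G$. The bipartite graph $B=(V_1,V_2,E_B)$ has $V_1=\{x_1,\dots,x_n\}$, $V_2=\{y_1,\dots,y_n\}$ and $E_B=\{(x_i,y_j) : (v_i,v_j)\in E'\}$; a matching is a set of edges of $E_B$ no two sharing an endpoint. Let $S=\{s_1,\dots,s_n\}$ be a set of streams; a stream assignment is a function $V\to S$, considered up to permutation of $S$. For a matching $m$, $\Phi(m)$ is the stream assignment obtained by starting from the partition $\{\{v_1\},\dots,\{v_n\}\}$, merging, for each $(x_i,y_j)\in m$, the blocks containing $v_i$ and $v_j$, and assigning two vertices the same stream iff they lie in the same block. A synchronization plan $\Lambda\subseteq E'$ is safe for a stream assignment $f$ on $G'$ if for every edge $(u,v)\in E'$, either $f(u)=f(v)$ or there is a path $P\subseteq E'$ from $u$ to $v$ with $P\cap\Lambda\neq\emptyset$; $\mathrm{min}_{sync}(G',f)=\min\{|\Lambda| : \Lambda\subseteq E' \text{ safe for } f \text{ on } G'\}$. *)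

(* Defs.v *)
From mathcomp Require Import all_boot.
Set Implicit Arguments. Unset Strict Implicit. Unset Printing Implicit Defensive.

Section Defs.
Variable n : nat.
Notation V := 'I_n.
Notation edges := {set V * V}.

Definition epath (E : edges) (u : V) (p : seq V) : bool :=
  path (fun x y => (x, y) \in E) u p.

Definition path_edges (u : V) (p : seq V) : seq (V * V) := zip (u :: p) p.

Definition is_path (E : edges) (u v : V) (p : seq V) : Prop :=
  [/\ p != [::], epath E u p & last u p = v].

Definition reach (E : edges) (u v : V) : Prop := exists p, is_path E u v p.

Definition acyclic (E : edges) : Prop := forall v, ~ reach E v v.

Definition same_reach (E1 E2 : edges) : Prop :=
  forall u v, reach E1 u v <-> reach E2 u v.

Definition is_MEG (E E' : edges) : Prop :=
  [/\ E' \subset E, same_reach E' E &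
      forall E'' : edges, E'' \subset E -> same_reach E'' E -> #|E'| <= #|E''|].

(* m is a matching of the bipartite graph B: (x_i, y_j) is encoded as (i, j) *)
Definition is_matching (E' m : edges) : Prop :=
  m \subset E' /\
  forall e1 e2 : V * V, e1 \in m -> e2 \in m -> e1 != e2 ->
    e1.1 != e2.1 /\ e1.2 != e2.2.

(* Phi(m): blocks are the connected components of the undirected graph
   whose edges are m; each vertex is assigned the stream named by the
   canonical representative of its block (streams S = 'I_n). *)
Definition merge_rel (m : edges) : rel V :=
  fun x y => ((x, y) \in m) || ((y, x) \in m).

Definition Phi (m : edges) : V -> V := fun v => root (merge_rel m) v.

Definition safe (E' : edges) (f : V -> V) (L : edges) : Prop :=
  L \subset E' /\
  forall u v : V, (u, v) \in E' ->
    f u = f v \/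
    exists p, is_path E' u v p /\ has (fun e => e \in L) (path_edges u p).

Definition is_min_sync (E' : edges) (f : V -> V) (k : nat) : Prop :=
  (exists L : edges, safe E' f L /\ #|L| = k) /\
  (forall L : edges, safe E' f L -> k <= #|L|).

End Defs.

(* Main.v *)
Require Import Defs.
From mathcomp Require Import all_boot.
Set Implicit Arguments. Unset Strict Implicit. Unset Printing Implicit Defensive.

Definition er {n} (E : {set 'I_n * 'I_n}) : rel 'I_n := fun x y => (x, y) \in E.

Lemma reachP n (E : {set 'I_n * 'I_n}) u v :
  reach E u v <-> exists w, (u, w) \in E /\ connect (er E) w v.
Proof.
split.
- case=> [[|w p] [//= _ /andP[hw hp] hl]].
  exists w; split=> //; apply/connectP; exists p => //.
- case=> w [hw /connectP [p hp hl]].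
  exists (w :: p); split=> //=; by rewrite ?hw ?hl.
Qed.

Lemma connect_subset n (A B : {set 'I_n*'I_n}) x y :
  A \subset B -> connect (er A) x y -> connect (er B) x y.
Proof.
move=> hAB; apply: connect_sub x y => a b hab; apply: connect1; exact: (subsetP hAB).
Qed.

Lemma connect_avoid n (E : {set 'I_n*'I_n}) u v a b :
  connect (er E) a b -> ~~ connect (er E) a u ->
  connect (er (E :\ (u,v))) a b.
Proof.
move=> /connectP [p hp ->]; elim: p a hp => [|c p IH] a /= hp hna;
  first exact: connect0.
case/andP: hp => hac hp.
have hau : a != u by apply: contraNneq hna => ->; exact: connect0.
have hh1 : connect (er (E :\ (u,v))) a c.
  apply: connect1; rewrite /er !inE; rewrite /er in hac; rewrite hac andbT.
  by apply/eqP => -[] hh; rewrite hh eqxx in hau.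
apply: connect_trans hh1 _.
apply: IH => //; apply: contraNN hna => hcu.
  by apply: connect_trans (connect1 _) hcu.
Qed.

Lemma MEG_acyclic n (E E' : {set 'I_n * 'I_n}) :
  acyclic E -> is_MEG E E' -> acyclic E'.
Proof. by move=> hA [_ hS _] x hx; apply: (hA x); apply/hS. Qed.

Lemma core n (E E' : {set 'I_n * 'I_n}) u v w :
  acyclic E -> is_MEG E E' -> (u,v) \in E' -> (u,w) \in E' -> w != v ->
  connect (er E') w v -> False.
Proof.
move=> hA hM huv huw hwv hc.
have hA' := MEG_acyclic hA hM.
case: hM => hsub hS hmin.
set E'' := E' :\ (u,v).
have hwu : ~~ connect (er E') w u.
  by apply/negP => h; apply: (hA' u); apply/reachP; exists w.
have h1 : connect (er E'') w v := connect_avoid v hc hwu.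
have hcon : forall x y, connect (er E') x y -> connect (er E'') x y.
  move=> x y /connectP [p hp ->]; elim: p x hp => [|c p IH] x /= hp;
    first exact: connect0.
  case/andP: hp => hxc hp; apply: connect_trans (IH _ hp).
  have [e|ne] := eqVneq (x,c) (u,v).
  - case: e => -> ->; apply: connect_trans (connect1 _) h1.
    rewrite /er /E'' !inE huw andbT; apply: contra hwv => /eqP [->] //.
  - by apply: connect1; rewrite /er /E'' !inE ne.
have hS'' : same_reach E'' E.
  move=> x y; apply: iff_trans (hS x y); split.
  - case/reachP => z [hz hzy]; apply/reachP; exists z; split.
      by move: hz; rewrite !inE => /andP[].
    by apply: connect_subset hzy; apply: subsetDl.
  - case/reachP => z [hz hzy]; have := hcon _ _ hzy.
    have [e|ne] := eqVneq (x,z) (u,v).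
    + case: e => -> -> hvy; apply/reachP; exists w; split.
        rewrite /E'' !inE huw andbT; apply: contra hwv => /eqP [->] //.
      exact: connect_trans h1 hvy.
    + move=> hzy''; apply/reachP; exists z; split => //.
      by rewrite /E'' !inE ne.
have := hmin E'' (subset_trans (subsetDl _ _) hsub) hS''.
by rewrite (cardsD1 (u,v) E') huv add1n ltnn.
Qed.

Lemma only_edge n (E E' : {set 'I_n * 'I_n}) u v p :
  acyclic E -> is_MEG E E' -> (u,v) \in E' -> is_path E' u v p -> p = [:: v].
Proof.
move=> hA hM huv [].
case: p => [//|w p] _ /= /andP[huw hp] hl.
case: p hp hl => [|c p] hp hl; first by rewrite /= in hl; rewrite hl.
exfalso; have [e|ne] := eqVneq w v.
- rewrite e in hp hl; apply: (MEG_acyclic hA hM (_ : reach E' v v)); exists (c :: p); split => //.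
- apply: (core hA hM huv huw ne); apply/connectP; exists (c :: p) => //.
Qed.

Lemma chain n (m : {set 'I_n*'I_n}) x y :
  (forall a b z, (a,z) \in m -> (b,z) \in m -> a = b) ->
  (forall a b z, (z,a) \in m -> (z,b) \in m -> a = b) ->
  connect (merge_rel m) x y -> connect (er m) x y \/ connect (er m) y x.
Proof.
move=> hin hout /connectP [p hp ->] {y}.
elim/last_ind: p hp => [|p z IH] hp; first by left; exact: connect0.
rewrite rcons_path in hp; case/andP: hp => hp hz; rewrite last_rcons.
move: hz; rewrite /merge_rel => hz.
case: (IH hp) => h; case/orP: hz => hz.
- left; exact: connect_trans h (connect1 hz).
- case/connectP: h => q hq hyq.
  case/lastP: q hq hyq => [|q a] hq hyq.
  + right; rewrite /= in hyq; rewrite -hyq; exact: connect1 hz.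
  + left; rewrite rcons_path in hq; case/andP: hq => hq ha.
    rewrite last_rcons in hyq; rewrite hyq in hz.
    have e : last x q = z := hin _ _ _ ha hz.
    apply/connectP; exists q => //; by rewrite e.
- case/connectP: h => q hq hxq; case: q hq hxq => [|a q] hq hxq.
  + left; rewrite /= in hxq; rewrite hxq; exact: connect1 hz.
  + right; case/andP: hq => ha hq.
    have e : a = z := hout _ _ _ ha hz.
    apply/connectP; exists q => //; by rewrite -e.
- right; exact: connect_trans (connect1 hz) h.
Qed.

Theorem theorem3 (n : nat) (E E' : {set 'I_n * 'I_n}) :
  acyclic E -> is_MEG E E' ->
  forall m : {set 'I_n * 'I_n}, is_matching E' m ->
  is_min_sync E' (Phi m) (#|E'| - #|m|).
Proof.
move=> hA hM m [hmE hmat].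
have hin : forall a b z, (a,z) \in m -> (b,z) \in m -> a = b.
  move=> a b z h1 h2; apply/eqP; apply: contraT => hab.
  have hne : (a,z) != (b,z) by apply: contra hab => /eqP [->].
  by case: (hmat _ _ h1 h2 hne) => _ /=; rewrite eqxx.
have hout : forall a b z, (z,a) \in m -> (z,b) \in m -> a = b.
  move=> a b z h1 h2; apply/eqP; apply: contraT => hab.
  have hne : (z,a) != (z,b) by apply: contra hab => /eqP [->].
  by case: (hmat _ _ h1 h2 hne) => /=; rewrite eqxx.
have hsym : connect_sym (merge_rel m).
  by apply: sym_connect_sym => a b; rewrite /merge_rel orbC.
have hPhi : forall a b, (Phi m a == Phi m b) = connect (merge_rel m) a b.
  by move=> a b; apply/eqP/idP => /(rootP hsym).
have hA' := MEG_acyclic hA hM.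
have key : forall u v, (u,v) \in E' -> (Phi m u == Phi m v) = ((u,v) \in m).
  move=> u v huv; rewrite hPhi; apply/idP/idP; last first.
    by move=> h; apply: connect1; rewrite /merge_rel h.
  move=> /(chain hin hout) [] h; apply: contraT => hnm; exfalso.
  + case/connectP: h => [[|w p] hp hl].
    * rewrite /= in hl; subst v; apply: (hA' u); apply/reachP; exists u.
      by split => //; exact: connect0.
    * case/andP: hp => huw hp; have [e|ne] := eqVneq w v.
      - by subst w; rewrite /er in huw; rewrite huw in hnm.
      - apply: (core hA hM huv (subsetP hmE _ huw) ne).
        apply: connect_subset hmE _; apply/connectP; by exists p.
  + apply: (hA' u); apply/reachP; exists v; split => //.
    exact: connect_subset hmE h.
have hcard : #|E' :\: m| = #|E'| - #|m| by rewrite cardsD (setIidPr hmE).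
split.
- exists (E' :\: m); split => //.
  split; first exact: subsetDl.
  move=> u v huv; case hm: ((u,v) \in m).
  + by left; apply/eqP; rewrite key.
  + right; exists [:: v]; split; first by split => //=; rewrite huv.
    by rewrite /= !inE hm huv.
- move=> L [hL hsafe]; rewrite -hcard; apply: subset_leq_card.
  apply/subsetP => -[u v]; rewrite inE => /andP[hnm huv].
  case: (hsafe u v huv) => [e|[p [hp hh]]].
  + by have := key u v huv; rewrite e eqxx => hm; rewrite -hm in hnm.
  + by rewrite (only_edge hA hM huv hp) /= orbF in hh.
Qed.
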